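(* Let $A$ be a binary matrix and let $U$ and $V$ be two distinct bases of $A$. Then at most one of $U$, $V$ spans the other; this holds both in the binary setting and in the boolean setting.
   Context: A set $X$ of $\{0,1\}$-vectors spans a vector $y$ in the binary (resp. boolean) sense if $y=\sum_{x\in X}c_xx$ with $c_x\in\{0,1\}$ using ordinary (resp. boolean, $1+1=1$) addition; $X$ spans a set $Y$ if it spans each vector of $Y$. A binary (resp. boolean) base of an $n\times m$ binary matrix $A$ is a set of $\{0,1\}$ column vectors of length $n$ spanning every column of $A$ in the corresponding sense, of minimum cardinality among such spanning sets. *)

(* Defs.v *)
From mathcomp Require Import all_boot all_algebra.
Set Implicit Arguments. Unset Strict Implicit. Unset Printing Implicit Defensive.

Notation bvec n := 'cV[bool]_n.

(* Binary span: y = sum_{x in X} c_x x with c_x in {0,1}, ordinary (integer)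
   addition; the coefficients are encoded by the subset S = {x | c_x = 1}. *)
Definition binary_spans n (X : {set bvec n}) (y : bvec n) : Prop :=
  exists2 S : {set bvec n}, S \subset X &
    forall i : 'I_n, nat_of_bool (y i ord0) = (\sum_(x in S) nat_of_bool (x i ord0))%N.

(* Boolean span: same with boolean addition (1+1=1), i.e. entrywise "or". *)
Definition boolean_spans n (X : {set bvec n}) (y : bvec n) : Prop :=
  exists2 S : {set bvec n}, S \subset X &
    forall i : 'I_n, y i ord0 = [exists x in S, x i ord0].

Definition spans_set n (sp : {set bvec n} -> bvec n -> Prop)
  (X Y : {set bvec n}) : Prop := forall y, y \in Y -> sp X y.

Definition spans_matrix n m (sp : {set bvec n} -> bvec n -> Prop)
  (X : {set bvec n}) (A : 'M[bool]_(n, m)) : Prop := forall j : 'I_m, sp X (col j A).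

Definition is_base n m (sp : {set bvec n} -> bvec n -> Prop)
  (A : 'M[bool]_(n, m)) (U : {set bvec n}) : Prop :=
  spans_matrix sp U A /\
  forall W : {set bvec n}, spans_matrix sp W A -> #|U| <= #|W|.

(* Main.v *)
Require Import Defs.
From mathcomp Require Import all_boot all_algebra.

Definition vle {n} (x y : bvec n) := forall i : 'I_n, x i ord0 -> y i ord0.

Lemma vle_antisym {n} (x y : bvec n) : vle x y -> vle y x -> x = y.
Proof.
move=> h1 h2; apply/matrixP => i j; rewrite (ord1 j).
by apply/idP/idP; [apply: h1|apply: h2].
Qed.

Section Generic.
Variable n : nat.
Variable sp : {set bvec n} -> bvec n -> Prop.
Hypothesis sp_refl : forall (X : {set bvec n}) y, y \in X -> sp X y.
Hypothesis sp_mono : forall (X X' : {set bvec n}) y, X \subset X' -> sp X y -> sp X' y.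
Hypothesis sp_le : forall (X : {set bvec n}) y, sp X y ->
  exists2 S : {set bvec n}, S \subset X & sp S y /\ forall x, x \in S -> vle x y.
Hypothesis sp_trans : forall X Y z, spans_set sp X Y -> sp Y z -> sp X z.

Lemma base_sub {m} {A : 'M[bool]_(n, m)} {U V} :
  is_base sp A U -> spans_set sp U V -> spans_set sp V U -> U \subset V.
Proof.
move=> [spU minU] sUV sVU; apply/subsetP => u uU.
apply/negPn/negP => uV.
have [S SV [spS Sle]] := sp_le _ _ (sVU u uU).
have hS : spans_set sp (U :\ u) S.
  move=> v vS.
  have vV : v \in V by apply: (subsetP SV).
  have [T TU [spT Tle]] := sp_le _ _ (sUV v vV).
  apply: sp_mono _ _ _ _ spT; apply/subsetP => x xT.
  rewrite in_setD1 (subsetP TU) // andbT.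
  apply/eqP => exu; subst x.
  have uv : u = v by apply: vle_antisym; [apply: Tle|apply: Sle].
  by rewrite uv vV in uV.
have hU : spans_set sp (U :\ u) U.
  move=> x xU; have [->|xu] := eqVneq x u; first exact: sp_trans _ _ _ hS spS.
  by apply: sp_refl; rewrite in_setD1 xu.
have := minU (U :\ u) (fun j => sp_trans _ _ _ hU (spU j)).
by rewrite (cardsD1 u U) uU ltnn.
Qed.

Lemma base_main {m} (A : 'M[bool]_(n, m)) U V :
  U != V -> is_base sp A U -> is_base sp A V ->
  ~ (spans_set sp U V /\ spans_set sp V U).
Proof.
move=> nUV bU bV [h1 h2]; move/negP: nUV; apply; apply/eqP/eqP.
by rewrite eqEsubset (base_sub bU h1 h2) (base_sub bV h2 h1).
Qed.
End Generic.

Section Bool.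
Variable n : nat.
Lemma bo_refl (X : {set bvec n}) y : y \in X -> boolean_spans X y.
Proof.
move=> yX; exists [set y]; first by rewrite sub1set.
move=> i; apply/idP/existsP => [yi|[x /andP[/set1P -> //]]].
by exists y; rewrite set11.
Qed.
Lemma bo_mono (X X' : {set bvec n}) y : X \subset X' -> boolean_spans X y -> boolean_spans X' y.
Proof. by move=> sXX' [S SX h]; exists S => //; apply: subset_trans sXX'. Qed.
Lemma bo_le (X : {set bvec n}) y : boolean_spans X y ->
  exists2 S : {set bvec n}, S \subset X & boolean_spans S y /\ forall x, x \in S -> vle x y.
Proof.
move=> [S SX h]; exists S => //; split; first by exists S.
by move=> x xS i xi; rewrite h; apply/existsP; exists x; rewrite xS.
Qed.
Lemma bo_trans (X Y : {set bvec n}) z : spans_set (@boolean_spans n) X Y -> boolean_spans Y z -> boolean_spans X z.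
Proof.
move=> hXY [S SY hz].
exists [set x in X | [forall i, x i ord0 ==> z i ord0]].
  by apply/subsetP => x; rewrite inE => /andP[].
move=> i; apply/idP/existsP => [zi|[x /andP[]]]; last first.
  by rewrite inE => /andP[_ /forallP/(_ i)/implyP].
move: zi; rewrite hz => /existsP[y /andP[yS yi]].
have [T TX hy] := hXY y (subsetP SY y yS).
move: yi; rewrite hy => /existsP[x /andP[xT xi]].
exists x; rewrite xi andbT inE (subsetP TX) //=.
apply/forallP => k; apply/implyP => xk; rewrite hz; apply/existsP; exists y.
by rewrite yS hy; apply/existsP; exists x; rewrite xT.
Qed.
End Bool.

Section Bin.
Variable n : nat.
Lemma bi_refl (X : {set bvec n}) y : y \in X -> binary_spans X y.
Proof.
move=> yX; exists [set y]; first by rewrite sub1set.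
by move=> i; rewrite big_set1.
Qed.
Lemma bi_mono (X X' : {set bvec n}) y : X \subset X' -> binary_spans X y -> binary_spans X' y.
Proof. by move=> sXX' [S SX h]; exists S => //; apply: subset_trans sXX'. Qed.
Lemma bi_le (X : {set bvec n}) y : binary_spans X y ->
  exists2 S : {set bvec n}, S \subset X & binary_spans S y /\ forall x, x \in S -> vle x y.
Proof.
move=> [S SX h]; exists S => //; split; first by exists S.
move=> x xS i xi; have := h i; rewrite (bigD1 x) //= xi.
by case: (y i ord0).
Qed.
Lemma bi_trans (X Y : {set bvec n}) z : spans_set (@binary_spans n) X Y -> binary_spans Y z -> binary_spans X z.
Proof.
move=> hXY [S SY hz].
have H : forall y : bvec n, exists T : {set bvec n}, y \in Y ->
    T \subset X /\ forall i, nat_of_bool (y i ord0) = (\sum_(x in T) nat_of_bool (x i ord0))%N.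
  move=> y; case yY: (y \in Y); last by exists set0.
  by have [T TX h] := hXY y yY; exists T.
have [T hT] := fin_all_exists H.
exists (\bigcup_(y in S) T y).
  by apply/bigcupsP => y yS; case: (hT y (subsetP SY y yS)).
move=> i.
have hD : nat_of_bool (z i ord0) = (\sum_(y in S) \sum_(x in T y) nat_of_bool (x i ord0))%N.
  rewrite hz; apply: eq_bigr => y yS; by case: (hT y (subsetP SY y yS)).
have hle : (\sum_(x in \bigcup_(y in S) T y) nat_of_bool (x i ord0) <=
           \sum_(y in S) \sum_(x in T y) nat_of_bool (x i ord0))%N.
  apply: (@leq_trans (\sum_(x in \bigcup_(y in S) T y) \sum_(y in S) ((x \in T y) * nat_of_bool (x i ord0)))%N).
    apply: leq_sum => x /bigcupP[y yS xT].
    by rewrite (bigD1 y) //= xT mul1n leq_addr.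
  rewrite exchange_big /=; apply: leq_sum => y yS.
  rewrite [X in (_ <= X)%N]big_mkcond [X in (X <= _)%N]big_mkcond /=; apply: leq_sum => x _.
  case xT: (x \in T y); last by rewrite mul0n; case: ifP.
  by rewrite mul1n; have -> : x \in \bigcup_(y0 in S) T y0 by apply/bigcupP; exists y.
case zi: (z i ord0).
  move: (hz i); rewrite zi.
  case: (pickP [pred y | (y \in S) && y i ord0]) => [y /andP[yS yi] _|no]; last first.
    by rewrite big1 // => y yS; have := no y; rewrite /= yS /=; case: (y i ord0).
  have [TX hy] := hT y (subsetP SY y yS).
  move: (hy i); rewrite yi.
  case: (pickP [pred x | (x \in T y) && x i ord0]) => [x /andP[xT xi] _|no]; last first.
    by rewrite big1 // => x xT; have := no x; rewrite /= xT /=; case: (x i ord0).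
  move: hle; rewrite -hD zi => hle.
  apply/eqP; rewrite eqn_leq hle /= (bigD1 x) /=; first by rewrite xi.
  by apply/bigcupP; exists y.
move: hle; rewrite -hD zi leqn0 => /eqP -> //.
Qed.
End Bin.

Theorem mainTheorem18 (n m : nat) (A : 'M[bool]_(n, m)) (U V : {set 'cV[bool]_n}) :
  U != V ->
  (is_base (@binary_spans n) A U -> is_base (@binary_spans n) A V ->
     ~ (spans_set (@binary_spans n) U V /\ spans_set (@binary_spans n) V U)) /\
  (is_base (@boolean_spans n) A U -> is_base (@boolean_spans n) A V ->
     ~ (spans_set (@boolean_spans n) U V /\ spans_set (@boolean_spans n) V U)).
Proof.
move=> nUV; split.
  exact: (@base_main n (@binary_spans n) (@bi_refl n) (@bi_mono n) (@bi_le n) (@bi_trans n) _ A U V nUV).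
exact: (@base_main n (@boolean_spans n) (@bo_refl n) (@bo_mono n) (@bo_le n) (@bo_trans n) _ A U V nUV).
Qed.
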